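(* Every Massouros hyperfield has the FETVINS property. That is: let $F$ be a Massouros hyperfield (as defined in the context). Then for all integers $k<n$ and every system of $k$ homogeneous linear equations over $F$ in the $n$ variables $x_1,\dots,x_n$, there exist values $x_1,\dots,x_n\in F$, not all equal to $0$, which satisfy all $k$ equations simultaneously.
   Context: A hyperaddition on a nonempty set $H$ is a map $+:H\times H\to\mathcal P^*(H)$ (nonempty subsets of $H$) that is commutative and associative, where for subsets $A,B$ one sets $A+B=\bigcup_{a\in A,b\in B}(a+b)$ and an element $x$ is identified with $\{x\}$. A hypergroup is a set with a hyperaddition having a unique $0$ with $0+h=\{h\}$ for all $h$, such that for each $x$ there is a unique $y=:-x$ with $0\in x+y$, and such that $x\in y+z$ implies $z\in x+(-y)$. A hyperfield is a set $F$ with a hyperaddition and a multiplication such that $(F,+)$ is a hypergroup, $(F,\cdot)$ is a monoid, $a(b+c)=ab+ac$, $r\cdot 0=0$ for all $r$, and $F\setminus\{0\}$ is a multiplicative group. Massouros hyperfield: let $G$ be an abelian group written multiplicatively, $H$ a group, and $\phi:G\to H$ a group homomorphism with $|\phi(G)|\ge 3$. Let $F=G\cup\{0\}$, with multiplication that of $G$ extended by $0\cdot x=x\cdot 0=0$ for all $x\in F$, and equipped with a hyperaddition making $F$ a hyperfield. $F$ is called Massouros (with respect to $\phi$) if: (1) $\phi(-x)=\phi(x)$ for all $x\in G$; (2) for all $x,y\in G$ with $\phi(x)=\phi(y)$ one has $G\setminus\phi^{-1}(\phi(x))\subseteq x+y$; (3) for all $x,y\in G$ with $\phi(x)\ne\phi(y)$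 one has $\phi^{-1}(\{\phi(x),\phi(y)\})\subseteq x+y$. A homogeneous linear equation over $F$ is a statement $a_1x_1+a_2x_2+\cdots+a_mx_m\ni 0$ with nonzero coefficients $a_i\in F$ (terms with zero coefficient are omitted); values of the variables in $F$ satisfy it if $0$ belongs to the (set-valued) sum. *)

(* Defs.v *)
From mathcomp Require Import all_boot.
From Stdlib Require List.

Set Implicit Arguments.
Unset Strict Implicit.
Unset Printing Implicit Defensive.

(* A hyperaddition on F is encoded as a ternary relation:
   [add x y w] means  w \in x + y. *)

Section Hyper.
Variables (F : Type) (zero one : F) (mul : F -> F -> F)
          (add : F -> F -> F -> Prop).

Definition is_hyperaddition : Prop :=
  [/\ forall x y, exists w, add x y w,
      forall x y w, add x y w <-> add y x w &
      forall x y z w,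
        (exists u, add x y u /\ add u z w) <-> (exists v, add y z v /\ add x v w)].

Definition is_hypergroup : Prop :=
  [/\ is_hyperaddition,
      forall h w, add zero h w <-> w = h,
      forall z, (forall h w, add z h w <-> w = h) -> z = zero,
      forall x, exists y, add x y zero /\ forall y', add x y' zero -> y' = y &
      forall x y z y', add y y' zero -> add y z x -> add x y' z].

Definition is_hyperfield : Prop :=
  [/\ is_hypergroup,
      (forall a b c, mul a (mul b c) = mul (mul a b) c)
        /\ (forall a, mul one a = a /\ mul a one = a),
      forall a b c w, (exists u, add b c u /\ w = mul a u) <-> add (mul a b) (mul a c) w,
      forall r, mul r zero = zero &
      [/\ one <> zero,
          forall x y, x <> zero -> y <> zero -> mul x y <> zero &
          forall x, x <> zero -> exists y, [/\ y <> zero, mul x y = one & mul y x = one]]].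

Definition is_group (H : Type) (hmul : H -> H -> H) (hone : H) (hinv : H -> H) : Prop :=
  [/\ forall a b c, hmul a (hmul b c) = hmul (hmul a b) c,
      forall a, hmul hone a = a /\ hmul a hone = a &
      forall a, hmul (hinv a) a = hone /\ hmul a (hinv a) = hone].

(* Massouros hyperfield with respect to phi : G -> H, where G = F \ {0}
   (phi is given as a function on F; its value at 0 is irrelevant). *)
Definition is_massouros (H : Type) (hmul : H -> H -> H) (hone : H) (hinv : H -> H)
  (phi : F -> H) : Prop :=
  [/\ is_hyperfield,
      (forall x y, mul x y = mul y x) /\ (forall x, mul zero x = zero /\ mul x zero = zero),
      is_group hmul hone hinv
        /\ (forall x y, x <> zero -> y <> zero -> phi (mul x y) = hmul (phi x) (phi y)),
      (exists x y z, [/\ x <> zero, y <> zero & z <> zero]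
                      /\ [/\ phi x <> phi y, phi y <> phi z & phi x <> phi z]) &
      [/\
          forall x y, x <> zero -> add x y zero -> phi y = phi x,
          forall x y, x <> zero -> y <> zero -> phi x = phi y ->
            forall z, z <> zero -> phi z <> phi x -> add x y z &
          forall x y, x <> zero -> y <> zero -> phi x <> phi y ->
            forall z, z <> zero -> (phi z = phi x \/ phi z = phi y) -> add x y z]].

Fixpoint hsum (s : seq F) : F -> Prop :=
  match s with
  | [::] => fun w => w = zero
  | x :: s' =>
      match s' with
      | [::] => fun w => w = x
      | _ => fun w => exists u, hsum s' u /\ add x u w
      end
  end.

(* A homogeneous linear equation in the variables x_0, ..., x_(n-1):
   the list of terms (a, j) standing for a * x_j, with nonzero coefficients
   and distinct variables. *)
Definition lin_eq_wf (n : nat) (e : seq (F * 'I_n)) : Prop :=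
  (forall a j, List.In (a, j) e -> a <> zero) /\ uniq (map snd e).

Definition lin_eq_sat (n : nat) (e : seq (F * 'I_n)) (x : 'I_n -> F) : Prop :=
  hsum [seq mul p.1 (x p.2) | p <- e] zero.

End Hyper.

(* Main.v *)
Require Import Defs.
From mathcomp Require Import all_boot.
From Stdlib Require Import Classical.
From mathcomp Require Import zify.

Set Implicit Arguments.
Unset Strict Implicit.
Unset Printing Implicit Defensive.

Lemma In_filter (A : Type) (P : pred A) (s : seq A) x :
  List.In x (filter P s) <-> List.In x s /\ P x.
Proof.
elim: s => [|y s IH] /=; first by split => // [[]].
case Py: (P y) => /=; rewrite IH.
- split; first by case=> [<-|[]]; auto.
  by case=> [[<-|?] ?]; auto.
- split; first by case=> ? ?; auto.
  by case=> [[<-|?] Hp] //; rewrite Py in Hp.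
Qed.

Lemma In_map (A B : Type) (f : A -> B) (s : seq A) y :
  List.In y (map f s) <-> exists x, List.In x s /\ y = f x.
Proof.
elim: s => [|x s IH] /=; first by split => // [[x []]].
rewrite IH; split.
- by case=> [<-|[z [? ->]]]; [exists x | exists z]; auto.
- by case=> z [[<-|?] ->]; [left|right; exists z].
Qed.

Lemma map_ext_In (A B : Type) (f g : A -> B) (s : seq A) :
  (forall x, List.In x s -> f x = g x) -> map f s = map g s.
Proof.
elim: s => [|x s IH] //= H; rewrite H /=; last by left.
by rewrite IH // => y Hy; apply: H; right.
Qed.

Lemma count_ext_In (A : Type) (P Q : pred A) (s : seq A) :
  (forall x, List.In x s -> P x = Q x) -> count P s = count Q s.
Proof.
elim: s => [|x s IH] //= H; rewrite H /=; last by left.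
by rewrite IH // => y Hy; apply: H; right.
Qed.

Lemma has_In (A : Type) (P : pred A) (s : seq A) :
  has P s <-> exists x, List.In x s /\ P x.
Proof.
elim: s => [|x s IH] /=; first by split => // [[x []]].
split.
- case/orP=> [Px|Hs]; first by exists x; auto.
  by move/IH: Hs => [y [? ?]]; exists y; auto.
- case=> y [[<-|Hy] Py]; apply/orP; first by left.
  by right; apply/IH; exists y.
Qed.

Lemma all_In (A : Type) (P : pred A) (s : seq A) :
  all P s <-> forall x, List.In x s -> P x.
Proof.
elim: s => [|x s IH] /=; first by split.
split.
- by case/andP=> Px /IH Hs y [<-|Hy]; auto.
- by move=> H; apply/andP; split; [apply: H; left|apply/IH => y Hy; apply: H; right].
Qed.

Lemma count0_In (A : Type) (P : pred A) (s : seq A) x :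
  count P s = 0 -> List.In x s -> ~~ P x.
Proof.
elim: s => [|y s IH] //= Hc [<-|Hx].
- by apply/negP => Py; rewrite Py in Hc.
- by apply: IH => //; move: Hc; case: (P y).
Qed.

Lemma in_split_seq (A : Type) (s : seq A) x :
  List.In x s -> exists s1 s2, s = s1 ++ x :: s2.
Proof.
elim: s => [|y s IH] //= [<-|Hx]; first by exists [::], s.
by case: (IH Hx) => s1 [s2 ->]; exists (y :: s1), s2.
Qed.

Lemma split_first (A : Type) (P : pred A) (s : seq A) :
  count P s = 1 -> exists s1 e s2, s = s1 ++ e :: s2 /\ P e /\
     count P s1 = 0 /\ count P s2 = 0.
Proof.
elim: s => [|y s IH] //=.
case Py: (P y) => /= H.
- by exists [::], y, s; split => //; split => //; split => //; lia.
- case: (IH H) => s1 [e [s2 [-> [Pe [H1 H2]]]]].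
  by exists (y :: s1), e, s2; rewrite /= Py.
Qed.

Lemma In_cat (A : Type) (x : A) (s1 s2 : seq A) :
  List.In x (s1 ++ s2) <-> List.In x s1 \/ List.In x s2.
Proof.
elim: s1 => [|y s1 IH] /=; first by split; [right|case].
rewrite IH; split; first by case=> [|[]]; auto.
by case=> [[]|]; auto.
Qed.

Lemma ne_size (A : Type) (s : seq A) : 0 < size s -> s <> [::].
Proof. by case: s. Qed.
Lemma size_ne (A : Type) (s : seq A) : s <> [::] -> 0 < size s.
Proof. by case: s. Qed.

Lemma mem_In (T : eqType) (x : T) (s : seq T) : x \in s -> List.In x s.
Proof.
elim: s => [|y s IH] //; rewrite in_cons => /orP [/eqP ->|H]; [by left|by right; apply: IH].
Qed.

Section Mass.
Variables (F : Type) (zero one : F) (mul : F -> F -> F)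
  (add : F -> F -> F -> Prop)
  (HT : Type) (hmul : HT -> HT -> HT) (hone : HT) (hinv : HT -> HT) (phi : F -> HT).
Hypothesis HM : is_massouros zero one mul add hmul hone hinv phi.

Local Notation hs := (hsum zero add).

Lemma addNE x y : exists w, add x y w.
Proof. by case: HM => [[[[]]]]. Qed.
Lemma addC x y w : add x y w <-> add y x w.
Proof. by case: HM => [[[[]]]]. Qed.
Lemma addA x y z w :
  (exists u, add x y u /\ add u z w) <-> (exists v, add y z v /\ add x v w).
Proof. by case: HM => [[[[]]]]. Qed.
Lemma add0 h w : add zero h w <-> w = h.
Proof. by case: HM => [[[]]]. Qed.
Lemma addr0 h w : add h zero w <-> w = h.
Proof. by rewrite addC add0. Qed.
Lemma negE x : exists y, add x y zero.
Proof. by case: HM => [[[_ _ _ Hn _]]] _ _ _ _; case: (Hn x) => y []; exists y. Qed.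
Lemma dist a b c w : (exists u, add b c u /\ w = mul a u) <-> add (mul a b) (mul a c) w.
Proof. by case: HM => [[]]. Qed.
Lemma mulr0 r : mul r zero = zero.
Proof. by case: HM => [[]]. Qed.
Lemma mulA a b c : mul a (mul b c) = mul (mul a b) c.
Proof. by case: HM => [[_ [Ha _]]]. Qed.
Lemma mulC a b : mul a b = mul b a.
Proof. by case: HM => _ [Hc _]. Qed.
Lemma one_nz : one <> zero.
Proof. by case: HM => [[_ _ _ _ []]]. Qed.
Lemma mul_nz x y : x <> zero -> y <> zero -> mul x y <> zero.
Proof. by case: HM => [[_ _ _ _ [_ Hm _]]] _ _ _ _; apply: Hm. Qed.
Lemma invE x : x <> zero -> exists y, [/\ y <> zero, mul x y = one & mul y x = one].
Proof. by case: HM => [[_ _ _ _ [_ _ Hi]]] _ _ _ _; apply: Hi. Qed.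
Lemma mul1 a : mul one a = a.
Proof. by case: HM => [[_ [_ H1]]] _ _ _ _; case: (H1 a). Qed.
Lemma hmulA a b c : hmul a (hmul b c) = hmul (hmul a b) c.
Proof. by case: HM => _ _ [[]]. Qed.
Lemma hmul_cancel a b c : hmul a b = hmul a c -> b = c.
Proof.
case: HM => _ _ [[HA H1 HI] _] _ _ E.
have: hmul (hinv a) (hmul a b) = hmul (hinv a) (hmul a c) by rewrite E.
by rewrite !HA; case: (HI a) => -> _; case: (H1 b) => -> _; case: (H1 c) => -> _.
Qed.
Lemma phiM x y : x <> zero -> y <> zero -> phi (mul x y) = hmul (phi x) (phi y).
Proof. by case: HM => _ _ [_ Hp] _ _; apply: Hp. Qed.
Lemma three : exists x y z, [/\ x <> zero, y <> zero & z <> zero]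
                      /\ [/\ phi x <> phi y, phi y <> phi z & phi x <> phi z].
Proof. by case: HM. Qed.
Lemma M1 x y : x <> zero -> add x y zero -> phi y = phi x.
Proof. by case: HM => _ _ _ _ [H1 _ _]; apply: H1. Qed.
Lemma M2 x y z : x <> zero -> y <> zero -> phi x = phi y ->
   z <> zero -> phi z <> phi x -> add x y z.
Proof. by case: HM => _ _ _ _ [_ H2 _] ? ? ? ? ?; apply: H2. Qed.
Lemma M3 x y z : x <> zero -> y <> zero -> phi x <> phi y ->
   z <> zero -> (phi z = phi x \/ phi z = phi y) -> add x y z.
Proof. by case: HM => _ _ _ _ [_ _ H3] ? ? ? ? ?; apply: H3. Qed.

Lemma neg_nz x y : x <> zero -> add x y zero -> y <> zero.
Proof. by move=> Hx Ha Hy; subst y; move/addr0: Ha => Hx0; apply: Hx. Qed.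

Lemma hs_cons x s w : hs (x :: s) w <-> exists u, hs s u /\ add x u w.
Proof.
case: s => [|y s] /=; last by [].
split; first by move=> ->; exists zero; split => //; apply/addr0.
by case=> u [-> /addr0].
Qed.

Lemma hs_nil w : hs [::] w <-> w = zero.
Proof. by []. Qed.

Lemma hs_ne s : exists w, hs s w.
Proof.
elim: s => [|x s [u Hu]]; first by exists zero.
case: (addNE x u) => w Hw; exists w; apply/hs_cons; exists u; split => //.
Qed.

Lemma hs_pair x y w : hs [:: x; y] w <-> add x y w.
Proof. rewrite hs_cons; split; first by case=> u [/= -> ]. by move=> H; exists y. Qed.

Lemma add_lcomm a b x w :
  (exists u, add a b u /\ add x u w) <-> (exists u, add x b u /\ add a u w).
Proof.
rewrite -addA -addA; split; case=> u [H1 H2]; exists u; split => //; by apply/addC.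
Qed.

Lemma hs_split (A : Type) (f : A -> F) (p : pred A) (s : seq A) w :
  hs (map f s) w <-> exists a b, hs (map f (filter p s)) a /\
      hs (map f (filter (predC p) s)) b /\ add a b w.
Proof.
elim: s w => [|x s IH] w.
  split; first by move=> /= ->; exists zero, zero; split => //; split => //; apply/add0.
  by case=> a [b [/= -> [/= -> /add0]]].
rewrite [map f (x :: s)]/= hs_cons [filter p (x :: s)]/= [filter (predC p) (x :: s)]/=.
case Px: (p x) => /=.
- split.
  + case=> u [/IH [a [b [Ha [Hb Hab]]]] Hxu].
    have: exists v, add a b v /\ add (f x) v w by exists u.
    rewrite -addA; case=> a' [Ha' H']; exists a', b; split => //.
    by apply/hs_cons; exists a.
  + case=> a' [b [/hs_cons [a [Ha Hxa]] [Hb H]]].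
    have: exists u, add (f x) a u /\ add u b w by exists a'.
    rewrite addA; case=> u [Hu Hx]; exists u; split => //; apply/IH.
    by exists a, b.
- split.
  + case=> u [/IH [a [b [Ha [Hb Hab]]]] Hxu].
    have: exists v, add a b v /\ add (f x) v w by exists u.
    rewrite add_lcomm; case=> b' [Hb' H']; exists a, b'; split => //; split => //.
    by apply/hs_cons; exists b.
  + case=> a [b' [Ha [/hs_cons [b [Hb Hxb]] H]]].
    have: exists u, add (f x) b u /\ add a u w by exists b'.
    rewrite -add_lcomm; case=> u [Hu Hx]; exists u; split => //; apply/IH.
    by exists a, b.
Qed.

Lemma hs_zeros s w : (forall t, List.In t s -> t = zero) -> (hs s w <-> w = zero).
Proof.
elim: s w => [|x s IH] w Hz; first by split.
rewrite hs_cons (Hz x); last by left.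
have Hz' : forall t, List.In t s -> t = zero by move=> t Ht; apply: Hz; right.
split.
- by case=> u [Hu /add0 ->]; apply/(IH u Hz').
- move=> ->; exists zero; split; first by apply/(IH zero Hz').
  by apply/add0.
Qed.

Lemma hs_scale c s w : hs s w -> hs (map (mul c) s) (mul c w).
Proof.
elim: s w => [|x s IH] w; first by move=> /= ->; rewrite mulr0.
rewrite [map _ (x :: s)]/=.
move/hs_cons=> [u [Hu Hxu]]; apply/hs_cons; exists (mul c u); split; first exact: IH.
by apply/dist; exists w.
Qed.


Definition allnz (l : seq F) := forall t, List.In t l -> t <> zero.

Lemma pair2 x y : x <> zero -> y <> zero -> exists s1 s2,
  [/\ add x y s1, add x y s2, s1 <> zero, s2 <> zero & phi s1 <> phi s2].
Proof.
move=> Hx Hy.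
case: (classic (phi x = phi y)) => Exy; last first.
  by exists x, y; split => //; apply: M3 => //; [left|right].
case: three => g1 [g2 [g3 [[H1 H2 H3] [D12 D23 D13]]]].
have Hs : forall a b, a <> zero -> b <> zero -> phi a <> phi x -> phi b <> phi x ->
   phi a <> phi b -> exists s1 s2,
  [/\ add x y s1, add x y s2, s1 <> zero, s2 <> zero & phi s1 <> phi s2].
  by move=> a b ? ? ? ? ?; exists a, b; split => //; apply: M2.
case: (classic (phi g1 = phi x)) => E1.
  apply: (Hs g2 g3) => //; [by rewrite -E1; auto | by rewrite -E1; auto].
case: (classic (phi g2 = phi x)) => E2.
  apply: (Hs g1 g3) => //; rewrite -E2; auto.
by apply: (Hs g1 g2).
Qed.

Lemma hsN (l : seq F) : allnz l -> l <> [::] -> exists s, hs l s /\ s <> zero.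
Proof.
elim: l => [|x l IH] // Hnz _.
have Hx : x <> zero by apply: Hnz; left.
case: l IH Hnz => [|y l] IH Hnz; first by exists x.
case: IH => [t Ht|//|u [Hu Hu0]]; first by apply: Hnz; right.
case: (pair2 Hx Hu0) => s1 [s2 [H1 _ H1' _ _]].
by exists s1; split => //; apply/hs_cons; exists u.
Qed.

Lemma hsD x (l : seq F) : allnz (x :: l) -> l <> [::] -> exists s1 s2,
  [/\ hs (x :: l) s1, hs (x :: l) s2, s1 <> zero, s2 <> zero & phi s1 <> phi s2].
Proof.
move=> Hnz Hl.
have Hx : x <> zero by apply: Hnz; left.
case: (hsN (l:=l)) => // [t Ht|u [Hu Hu0]]; first by apply: Hnz; right.
case: (pair2 Hx Hu0) => s1 [s2 [H1 H2 N1 N2 D]].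
by exists s1, s2; split => //; apply/hs_cons; exists u.
Qed.

Lemma hsFull t (l : seq F) : allnz (t :: l) -> 2 <= size l -> hs (t :: l) zero ->
  forall w, hs (t :: l) w.
Proof.
move=> Hnz Hl /hs_cons [u [Hu Htu]] w.
have Ht : t <> zero by apply: Hnz; left.
have Hu0 : u <> zero by apply: neg_nz Htu.
have Eu : phi u = phi t by apply: M1 Htu.
case: (classic (w = zero)) => [->|Hw]; first by apply/hs_cons; exists u.
case: (classic (phi w = phi t)) => Ewt; last first.
  by apply/hs_cons; exists u; split => //; apply: M2.
case: l Hl Hnz Hu {Htu} => [|y l] // Hl Hnz Hu.
case: (hsD (x:=y) (l:=l)) => [z Hz||s1 [s2 [K1 K2 N1 N2 D]]].
- by apply: Hnz; right.
- by move=> El; rewrite El in Hl.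
case: (classic (phi s1 = phi t)) => E1.
- apply/hs_cons; exists s2; split => //; apply: M3 => //; first by rewrite -E1; auto.
  by left.
- apply/hs_cons; exists s1; split => //; apply: M3 => //; first by auto.
  by left.
Qed.

Lemma hsPair t1 t2 w : t1 <> zero -> hs [:: t1; t2] zero -> w <> zero ->
  phi w <> phi t1 -> hs [:: t1; t2] w.
Proof.
move=> H1 /hs_pair H0 Hw Ew; apply/hs_pair.
have H2 := neg_nz H1 H0.
by apply: M2 => //; rewrite (M1 H1 H0).
Qed.

Lemma count_split (A : Type) (a p : pred A) (s : seq A) :
  count a s = count a (filter p s) + count a (filter (predC p) s).
Proof. by elim: s => [|x s IH] //=; case: (p x) => /=; rewrite IH; lia. Qed.

Lemma count_filter_le (A : Type) (a p : pred A) (s : seq A) :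
  count a (filter p s) <= count a s.
Proof. by elim: s => [|x s IH] //=; case: (p x) => /=; lia. Qed.

Lemma all_ext_In (A : Type) (P Q : pred A) (s : seq A) :
  (forall x, List.In x s -> P x = Q x) -> all P s = all Q s.
Proof.
elim: s => [|x s IH] //= H; rewrite H /=; last by left.
by rewrite IH // => y Hy; apply: H; right.
Qed.

Variable n : nat.
Implicit Types (W T S : {set 'I_n}) (eqs : seq (seq (F * 'I_n))).

Definition tm (x : 'I_n -> F) (E : seq (F * 'I_n)) := [seq mul p.1 (x p.2) | p <- E].
Definition sat x E := hs (tm x E) zero.
Definition insideb S (E : seq (F * 'I_n)) := all (fun p => p.2 \in S) E.
Definition coefnz eqs := forall E p, List.In E eqs -> List.In p E -> p.1 <> zero.
Definition sparse W eqs := forall S, S \subset W -> S != set0 -> count (insideb S) eqs < #|S|.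

Definition CoreP N := forall W eqs, #|W| <= N -> all (insideb W) eqs -> coefnz eqs ->
  sparse W eqs -> exists x : 'I_n -> F, (forall j, j \in W -> x j <> zero) /\
     (forall j, j \notin W -> x j = zero) /\ (forall E, List.In E eqs -> sat x E).

Lemma case_i N (IH : CoreP N) W eqs T : #|W| <= N.+1 -> all (insideb W) eqs ->
  coefnz eqs -> sparse W eqs -> T \proper W -> 1 < #|T| ->
  (#|T|).-1 <= count (insideb T) eqs ->
  exists x : 'I_n -> F, (forall j, j \in W -> x j <> zero) /\
     (forall j, j \notin W -> x j = zero) /\ (forall E, List.In E eqs -> sat x E).
Proof.
move=> HW Hin Hc Hsp HTW HT1 HTc.
have sTW : T \subset W by apply: proper_sub.
have cTW : #|T| < #|W| by apply: proper_card.
have HinE : forall E, List.In E eqs -> forall p, List.In p E -> p.2 \in W.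
  by move=> E HE p Hp; move/all_In: Hin => /(_ E HE) /all_In /(_ p Hp).
set inT := filter (insideb T) eqs.
set outT := filter (predC (insideb T)) eqs.
case: (IH T inT) => [||||y [Hy1 [Hy2 Hy3]]].
- lia.
- by rewrite filter_all.
- by move=> E p /In_filter [HE _]; apply: Hc.
- move=> S sST S0; apply: leq_ltn_trans (count_filter_le _ _ _) _.
  by apply: Hsp => //; apply: subset_trans sTW.
have [u uT] : exists u, u \in T.
  by apply/set0Pn; apply/negP => /eqP T0; rewrite T0 cards0 in HT1.
have uW : u \in W by apply: (subsetP sTW).
set W' := u |: (W :\: T).
set contr := fun p : F * 'I_n => if p.2 \in T then (mul p.1 (y p.2), u) else p.
set ceqs := map (map contr) outT.
have HoutE : forall E, List.In E outT -> List.In E eqs /\ ~~ insideb T E.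
  by move=> E /In_filter [].
case: (IH W' ceqs) => [||||z [Hz1 [Hz2 Hz3]]].
- rewrite /W' cardsU1 cardsDS // in_setD uT /=; move: cTW HT1 HW; move: #|T| #|W| => a b; lia.
- apply/all_In => E' /In_map [E [HE ->]]; apply/all_In => p' /In_map [p [Hp ->]].
  rewrite /contr; case: ifP => pT /=; first by rewrite setU11.
  case: (HoutE E HE) => HE' _.
  by rewrite /W' in_setU1 in_setD pT (HinE E HE' p Hp) orbT.
- move=> E' p' /In_map [E [HE ->]] /In_map [p [Hp ->]].
  case: (HoutE E HE) => HE' _.
  rewrite /contr; case: ifP => pT /=; last by apply: Hc HE' Hp.
  by apply: mul_nz; [apply: Hc HE' Hp | apply: Hy1].
- move=> S sSW' S0; rewrite /ceqs count_map.
  case: (boolP (u \in S)) => uS.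
  + set Ss := T :|: (S :\ u).
    have E1 : forall E, List.In E outT -> (insideb S \o map contr) E = insideb Ss E.
      move=> E HE; rewrite /= /insideb all_map; apply: all_ext_In => p Hp /=.
      case: (HoutE E HE) => HE' _; have pW := HinE E HE' p Hp.
      rewrite /contr /Ss; case: ifP => pT /=; first by rewrite uS in_setU pT.
      rewrite in_setU pT in_setD1 /=; case: eqP => // pu.
      by rewrite pu uT in pT.
    rewrite (count_ext_In E1).
    have sSsW : Ss \subset W.
      rewrite /Ss subUset sTW /=; apply/subsetP => j /setD1P [ju jS].
      move/subsetP: sSW' => /(_ j jS); rewrite /W' in_setU1 (negbTE ju) /=.
      by case/setDP.
    have Ss0 : Ss != set0 by apply/set0Pn; exists u; rewrite /Ss in_setU uT.
    have Hlt := Hsp Ss sSsW Ss0.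
    have Hsplit := count_split (insideb Ss) (insideb T) eqs.
    have Hall : all (insideb Ss) inT.
      apply/all_In => E /In_filter [_]; rewrite /insideb.
      move/all_In => HT2; apply/all_In => p Hp; rewrite /Ss in_setU HT2 //.
    have HinTall : count (insideb Ss) inT = count (insideb T) eqs.
      by move: Hall; rewrite all_count => /eqP ->; rewrite size_filter.
    have cSs : #|Ss| = #|T| + #|S :\ u|.
      rewrite /Ss cardsU; suff -> : T :&: (S :\ u) = set0 by rewrite cards0 subn0.
      apply/eqP; rewrite -subset0; apply/subsetP => j /setIP [jT /setD1P [ju jS]].
      move/subsetP: sSW' => /(_ j jS); rewrite /W' in_setU1 (negbTE ju) /= in_setD jT //.
    have cS : #|S| = (#|S :\ u|).+1 by rewrite (cardsD1 u S) uS.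
    rewrite -/inT -/outT in Hsplit.
    lia.
  + have E1 : forall E, List.In E outT -> (insideb S \o map contr) E = insideb S E.
      move=> E HE; rewrite /= /insideb all_map; apply: all_ext_In => p Hp /=.
      rewrite /contr; case: ifP => pT //=; rewrite (negbTE uS).
      apply/esym/negbTE/negP => pS.
      move/subsetP: sSW' => /(_ _ pS); rewrite /W' in_setU1 in_setD pT /= ?andbF ?orbF.
      by move/eqP => pu; rewrite -pu pS in uS.
    rewrite (count_ext_In E1).
    apply: leq_ltn_trans (count_filter_le _ _ _) _.
    apply: Hsp => //; apply/subsetP => j jS.
    move/subsetP: sSW' => /(_ j jS); rewrite /W' in_setU1 => /orP [/eqP ju|].
      by rewrite -ju jS in uS.
    by case/setDP.
exists (fun j => if j \in T then mul (z u) (y j) else z j); split; last split.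
- move=> j jW; case: ifP => jT.
    by apply: mul_nz; [apply: Hz1; rewrite setU11 | apply: Hy1].
  by apply: Hz1; rewrite /W' in_setU1 in_setD jT jW orbT.
- move=> j jW; have jT : j \notin T by apply/negP => /(subsetP sTW); rewrite (negbTE jW).
  rewrite (negbTE jT); apply: Hz2; rewrite /W' in_setU1 in_setD (negbTE jT) (negbTE jW).
  by rewrite orbF; apply/eqP => ju; rewrite ju uW in jW.
- move=> E HE; case: (boolP (insideb T E)) => HTE.
  + have HEin : List.In E inT by apply/In_filter.
    have := hs_scale (z u) (Hy3 E HEin); rewrite mulr0 /sat /tm -map_comp.
    congr (hs _ zero); apply: map_ext_In => p Hp /=.
    move/all_In: HTE => /(_ p Hp) ->.
    by rewrite !mulA (mulC (z u)).
  + have HEout : List.In E outT by apply/In_filter.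
    have HEc : List.In (map contr E) ceqs by apply/In_map; exists E.
    have := Hz3 _ HEc; rewrite /sat /tm -map_comp.
    congr (hs _ zero); apply: map_ext_In => p Hp /=.
    rewrite /contr; case: ifP => pT //=.
    by rewrite (mulC (z u)) mulA.
Qed.

Lemma sum_count_eq (E : seq (F * 'I_n)) :
  \sum_(v : 'I_n) count (fun p => p.2 == v) E = size E.
Proof.
elim: E => [|p E IH] /=; first by rewrite big1.
rewrite big_split /= IH.
rewrite (bigD1 p.2) //= eqxx big1 ?addn0 // => i /negbTE; rewrite eq_sym => ->.
by [].
Qed.

Definition d3t v (E : seq (F * 'I_n)) :=
  (size E == 3) && (count (fun p => p.2 == v) E == 1).

Lemma d3sum W eqs : \sum_(v in W) count (d3t v) eqs <= 3 * size eqs.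
Proof.
elim: eqs => [|E es IH] /=; first by rewrite big1.
rewrite big_split /= mulnS.
have H1 : \sum_(v in W) (d3t v E : nat) <= 3.
  rewrite /d3t; case: eqP => Hs /=; last by rewrite big1.
  apply: (@leq_trans (\sum_(v in W) count (fun p => p.2 == v) E)).
    by apply: leq_sum => v _; case: eqP => // ->.
  apply: (@leq_trans (\sum_(v : 'I_n) count (fun p => p.2 == v) E)); last first.
    by rewrite sum_count_eq Hs.
  rewrite [X in _ <= X](bigID (fun v => v \in W)) /=; apply: leq_addr.
by apply: leq_add.
Qed.

Lemma exists_v W eqs : W != set0 -> size eqs < #|W| ->
  exists2 v, v \in W & count (d3t v) eqs <= 2.
Proof.
move=> W0 Hs; case: (boolP [exists v in W, count (d3t v) eqs <= 2]) => [/exists_inP //|/exists_inPn Hc].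
exfalso.
have : \sum_(v in W) 3 <= \sum_(v in W) count (d3t v) eqs.
  by apply: leq_sum => v vW; move: (Hc v vW); rewrite -ltnNge.
rewrite sum_nat_const => H; have := d3sum W eqs.
move: H Hs; move: #|W| (size eqs) (\sum_(v in W) count (d3t v) eqs) => a b c; lia.
Qed.

Definition xup (v : 'I_n) (c : F) (y : 'I_n -> F) := fun j => if j == v then c else y j.

Lemma ext_split v c y E :
  sat (xup v c y) E <-> exists a b,
    hs [seq mul p.1 c | p <- filter (fun p => p.2 == v) E] a /\
    hs (tm y (filter (fun p => p.2 != v) E)) b /\ add a b zero.
Proof.
rewrite /sat /tm (hs_split _ (fun p : F * 'I_n => p.2 == v)).
have -> : [seq mul p.1 (xup v c y p.2) | p <- filter (fun p => p.2 == v) E] =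
          [seq mul p.1 c | p <- filter (fun p => p.2 == v) E].
  by apply: map_ext_In => p /In_filter [_ Hp]; rewrite /xup Hp.
have -> : [seq mul p.1 (xup v c y p.2) | p <- filter (predC (fun p => p.2 == v)) E] =
          [seq mul p.1 (y p.2) | p <- filter (fun p => p.2 != v) E].
  by apply: map_ext_In => p /In_filter [_ Hp]; rewrite /xup (negbTE Hp).
by [].
Qed.

Lemma ext_good (Sy V : seq F) : allnz Sy -> hs Sy zero -> allnz V -> V <> [::] ->
  (3 <= size Sy \/ (size Sy = 2 /\ 2 <= size V)) ->
  exists a b, hs V a /\ hs Sy b /\ add a b zero.
Proof.
move=> HSy H0 HV V0 Hsz.
case: Sy HSy H0 Hsz => [|t l] HSy H0 Hsz; first by case: Hsz => [|[]].
case: Hsz => Hsz.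
  case: (hs_ne V) => a Ha; case: (negE a) => b Hb.
  exists a, b; split => //; split => //; apply: hsFull => //.
case: Hsz => [Hl HVs].
case: l HSy H0 Hl => [|t2 [|]] // HSy H0 _.
case: V HV V0 HVs => [|q r] // HV _ HVs.
case: (hsD (x:=q) (l:=r)) => // [|a1 [a2 [K1 K2 N1 N2 D]]].
  by move=> Er; rewrite Er in HVs.
have Ht : t <> zero by apply: HSy; left.
have Hfin : forall a, a <> zero -> hs (q :: r) a -> phi a <> phi t ->
   exists a b, hs (q :: r) a /\ hs [:: t; t2] b /\ add a b zero.
  move=> a Ha Hqa Hat; case: (negE a) => b Hb; exists a, b; split => //; split => //.
  apply: hsPair => //; first by apply: neg_nz Hb.
  by rewrite (M1 Ha Hb).
case: (classic (phi a1 = phi t)) => E1.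
  by apply: (Hfin a2) => //; rewrite -E1; auto.
by apply: (Hfin a1).
Qed.

Lemma ext_forb (t1 t2 q : F) : hs [:: t1; t2] zero -> t1 <> zero -> q <> zero ->
  phi q <> phi t1 -> exists a b, hs [:: q] a /\ hs [:: t1; t2] b /\ add a b zero.
Proof.
move=> H0 H1 Hq Hqt; case: (negE q) => b Hb; exists q, b; split => //; split => //.
apply: hsPair => //; first by apply: neg_nz Hb.
by rewrite (M1 Hq Hb).
Qed.

Lemma mulr1 a : mul a one = a.
Proof. by rewrite mulC mul1. Qed.

Lemma cand (Ev : seq (F * 'I_n)) al : al <> zero -> hs (map fst Ev) al ->
  exists ai, ai <> zero /\ forall (Sy : seq F) s, s <> zero -> hs Sy s ->
  exists c, [/\ c <> zero, phi c = hmul (phi ai) (phi s) &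
     exists a b, hs [seq mul p.1 c | p <- Ev] a /\ hs Sy b /\ add a b zero].
Proof.
move=> Hal Hs; case: (invE Hal) => ai [Hai Hm1 Hm2]; exists ai; split => // Sy s Hs0 HSy.
case: (negE s) => ns Hns.
have Hns0 : ns <> zero by apply: neg_nz Hns.
exists (mul ai ns); split.
- by apply: mul_nz.
- by rewrite (phiM Hai Hns0) (M1 Hs0 Hns).
- exists ns, s; split; last by split => //; apply/addC.
  have := hs_scale (mul ai ns) Hs.
  have -> : mul (mul ai ns) al = ns by rewrite mulC mulA Hm1 mul1.
  by rewrite -map_comp; congr (hs _ ns); apply: map_ext_In => p _ /=; rewrite mulC.
Qed.

Lemma case_ii N (IH : CoreP N) W eqs : #|W| <= N.+1 -> W != set0 ->
  all (insideb W) eqs -> coefnz eqs -> sparse W eqs ->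
  (forall T, T \proper W -> 1 < #|T| -> count (insideb T) eqs < (#|T|).-1) ->
  exists x : 'I_n -> F, (forall j, j \in W -> x j <> zero) /\
     (forall j, j \notin W -> x j = zero) /\ (forall E, List.In E eqs -> sat x E).
Proof.
move=> HW W0 Hin Hc Hsp Hnt.
have HinE : forall E, List.In E eqs -> forall p, List.In p E -> p.2 \in W.
  by move=> E HE p Hp; move/all_In: Hin => /(_ E HE) /all_In /(_ p Hp).
have Hsz : size eqs < #|W|.
  by have := Hsp W (subxx W) W0; move: Hin; rewrite all_count => /eqP ->.
case: (exists_v W0 Hsz) => v vW Hd3.
have cWv : #|W :\ v| < #|W| by rewrite (cardsD1 v W) vW.
have Hnv : forall E, List.In E eqs -> exists p, List.In p E /\ p.2 != v.
  move=> E HE.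
  have H1 : count (insideb [set v]) eqs = 0.
    have : count (insideb [set v]) eqs < #|[set v]|.
      apply: Hsp; first by rewrite sub1set.
      by apply/set0Pn; exists v; rewrite set11.
    by rewrite cards1; case: (count _ _).
  have := count0_In H1 HE; rewrite /insideb -has_predC => /has_In [p [Hp Hpv]].
  by exists p; split => //; move: Hpv; rewrite /= in_set1.
case: (boolP (has (fun E => 0 < count (fun p => p.2 == v) E) eqs)) => Hhas; last first.
  have Hno : forall E, List.In E eqs -> forall p, List.In p E -> p.2 != v.
    move=> E HE p Hp; apply/negP => /eqP pv; move/negP: Hhas; apply.
    apply/has_In; exists E; split => //; rewrite -has_count; apply/has_In.
    by exists p; split => //; rewrite pv.
  case: (IH (W :\ v) eqs) => [||||y [Hy1 [Hy2 Hy3]]].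
  - by move: cWv HW; move: #|W :\ v| #|W| => a b; lia.
  - apply/all_In => E HE; apply/all_In => p Hp.
    by rewrite in_setD1 (Hno E HE p Hp) (HinE E HE p Hp).
  - by [].
  - by move=> S sS S0; apply: Hsp => //; apply: subset_trans sS (subD1set W v).
  exists (xup v one y); split; [|split].
  - move=> j jW; rewrite /xup; case: eqP => [_|/eqP jv]; first exact: one_nz.
    by apply: Hy1; rewrite in_setD1 jv jW.
  - move=> j jW; rewrite /xup; case: eqP => [jv|_]; first by rewrite jv vW in jW.
    by apply: Hy2; rewrite in_setD1 (negbTE jW) andbF.
  - move=> E HE; rewrite /sat /tm (@map_ext_In _ _ _ (fun p => mul p.1 (y p.2))).
      exact: Hy3.
    by move=> p Hp; rewrite /xup (negbTE (Hno E HE p Hp)).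
set d3 := d3t v.
have [E [s1 [s2 [Heqs [HEv Hforb]]]]] : exists E s1 s2, eqs = s1 ++ E :: s2 /\
   0 < count (fun p => p.2 == v) E /\
   (count d3 (s1 ++ s2) = 0 \/ (count d3 (s1 ++ s2) = 1 /\ d3 E)).
  case: (posnP (count d3 eqs)) => Hd.
  - move/has_In: Hhas => [E [HE HEv]]; case: (in_split_seq HE) => s1 [s2 Hs].
    exists E, s1, s2; split => //; split => //; left.
    by move: Hd; rewrite Hs !count_cat /=; lia.
  - have : has d3 eqs by rewrite has_count.
    move/has_In => [E [HE HdE]]; case: (in_split_seq HE) => s1 [s2 Hs].
    exists E, s1, s2; split => //; split.
    + by move: HdE; rewrite /d3 /d3t => /andP [_ /eqP ->].
    + case: (posnP (count d3 (s1 ++ s2))) => H0; first by left.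
      right; split => //; move: Hd3 H0; rewrite -/d3 Hs !count_cat /= HdE /=; lia.
have HinS : forall E', List.In E' (s1 ++ s2) -> List.In E' eqs.
  move=> E' /In_cat [H|H]; rewrite Heqs; apply/In_cat; [left|right; right] => //.
have HinEq : List.In E eqs by rewrite Heqs; apply/In_cat; right; left.
set R := map (filter (fun p => p.2 != v)) (s1 ++ s2).
case: (IH (W :\ v) R) => [||||y [Hy1 [Hy2 Hy3]]].
- by move: cWv HW; move: #|W :\ v| #|W| => a b; lia.
- apply/all_In => E' /In_map [E0 [HE0 ->]]; apply/all_In => p /In_filter [Hp Hpv].
  by rewrite in_setD1 Hpv (HinE E0 (HinS E0 HE0) p Hp).
- move=> E' p /In_map [E0 [HE0 ->]] /In_filter [Hp _].
  by apply: Hc (HinS E0 HE0) Hp.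
- move=> S sS S0; rewrite /R count_map.
  have vS : v \notin S by apply/negP => /(subsetP sS); rewrite in_setD1 eqxx.
  have E1 : forall E0, List.In E0 (s1 ++ s2) ->
      (insideb S \o filter (fun p => p.2 != v)) E0 = insideb (v |: S) E0.
    move=> E0 _; rewrite /= /insideb all_filter; apply: all_ext_In => p _ /=.
    by rewrite in_setU1; case: eqP.
  rewrite (count_ext_In E1).
  have cS' : #|v |: S| = (#|S|).+1 by rewrite cardsU1 vS.
  have sSW : S \subset W by apply: subset_trans sS (subD1set W v).
  case: (eqVneq (v |: S) W) => HSW.
  + apply: leq_ltn_trans (count_size _ _) _.
    move: Hsz; rewrite Heqs size_cat /= size_cat -HSW cS'.
    by move: (size s1) (size s2) #|S| => a b c; lia.
  + have Hpr : v |: S \proper W.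
      by rewrite properEneq HSW /= subUset sub1set vW sSW.
    have := Hnt _ Hpr; rewrite cS' /= => H1.
    have {}H1 : count (insideb (v |: S)) eqs < #|S| by apply: H1; rewrite ltnS card_gt0.
    apply: (leq_ltn_trans _ H1); rewrite Heqs !count_cat /=.
    by move: (count _ s1) (count _ s2) (insideb _ E : nat) => a b c; lia.
have HSyR : forall E', List.In E' (s1 ++ s2) ->
    hs (tm y (filter (fun p => p.2 != v) E')) zero.
  by move=> E' HE'; apply: Hy3; apply/In_map; exists E'.
have HSynz : forall E0, List.In E0 eqs -> allnz (tm y (filter (fun p => p.2 != v) E0)).
  move=> E0 HE0 t /In_map [p [/In_filter [Hp Hpv] ->]].
  apply: mul_nz; first by apply: Hc HE0 Hp.
  by apply: Hy1; rewrite in_setD1 Hpv (HinE E0 HE0 p Hp).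
have HSyne : forall E0, List.In E0 eqs -> tm y (filter (fun p => p.2 != v) E0) <> [::].
  move=> E0 HE0; case: (Hnv E0 HE0) => p [Hp Hpv].
  have : List.In (mul p.1 (y p.2)) (tm y (filter (fun p => p.2 != v) E0)).
    by apply/In_map; exists p; split => //; apply/In_filter.
  by move=> H1 H2; rewrite H2 in H1.
have HVnz : forall E0 c, List.In E0 eqs -> c <> zero ->
    allnz [seq mul p.1 c | p <- filter (fun p => p.2 == v) E0].
  move=> E0 c HE0 Hc0 t /In_map [p [/In_filter [Hp _] ->]].
  by apply: mul_nz => //; apply: Hc HE0 Hp.
have Hsizes : forall E0 : seq (F * 'I_n), size E0 =
    count (fun p => p.2 == v) E0 + size (tm y (filter (fun p => p.2 != v) E0)).
  move=> E0; rewrite /tm size_map size_filter.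
  by rewrite -(count_predC (fun p : F * 'I_n => p.2 == v)).
have other_ok : forall E', List.In E' (s1 ++ s2) -> ~~ d3 E' ->
    forall c, c <> zero -> sat (xup v c y) E'.
  move=> E' HE' Hnd c Hc0; apply/ext_split.
  have HE'e := HinS E' HE'.
  case: (posnP (count (fun p => p.2 == v) E')) => Hcv.
  - have -> : filter (fun p => p.2 == v) E' = [::].
      by apply: size0nil; rewrite size_filter Hcv.
    exists zero, zero; split => //; split; first exact: HSyR.
    by apply/add0.
  - apply: ext_good; [exact: HSynz|exact: HSyR|exact: HVnz|..].
    + by apply: ne_size; rewrite size_map size_filter.
    + set Sy := tm y _.
      have Hs1 : 0 < size Sy by apply: size_ne; apply: HSyne.
      have Hs2 : size Sy != 1.
        apply/eqP => H1; have HSy0 := HSyR E' HE'; rewrite -/Sy in HSy0.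
        have Hnz := HSynz E' HE'e; rewrite -/Sy in Hnz.
        clear Hs1; case: Sy H1 HSy0 Hnz => [|t [|]] // _ /= H0 Hnz.
        by apply: (Hnz t); [left|].
      have HS := Hsizes E'; rewrite -/Sy in HS.
      have Hnd' : ~ (size E' = 3 /\ count (fun p => p.2 == v) E' = 1).
        by move=> [H3 H1]; move/negP: Hnd; apply; rewrite /d3 /d3t H3 H1.
      move/eqP: Hs2 => Hs2.
      rewrite size_map size_filter.
      case: (leqP 3 (size Sy)) => H3; first by left.
      right.
      move: HS Hcv Hs1 Hs2 H3 Hnd'; move: (size E') (count _ E') (size Sy) => a b d.
      move=> HS Hcv Hs1 Hs2 H3 Hnd'.
      have Hd2 : d = 2 by lia.
      split => //; case: (leqP 2 b) => // Hb.
      by exfalso; apply: Hnd'; split; lia.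
have forb_ok : forall E', List.In E' (s1 ++ s2) -> d3 E' -> forall c1 c2,
    c1 <> zero -> c2 <> zero -> phi c1 <> phi c2 ->
    sat (xup v c1 y) E' \/ sat (xup v c2 y) E'.
  move=> E' HE' Hd c1 c2 Hc1 Hc2 Dc.
  have HE'e := HinS E' HE'.
  have HS := Hsizes E'.
  move: Hd; rewrite /d3 /d3t => /andP [/eqP Hs3 /eqP Hc1v].
  have HSy0 := HSyR E' HE'; have Hnz := HSynz E' HE'e.
  have [p0 Hf] : exists p0, filter (fun p => p.2 == v) E' = [:: p0].
    move: Hc1v; rewrite -size_filter.
    by case: (filter _ E') => [|p0 [|]] // _; exists p0.
  have Hp0 : List.In p0 E'.
    by have : List.In p0 (filter (fun p => p.2 == v) E'); [rewrite Hf; left|case/In_filter].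
  have Hb : p0.1 <> zero by apply: Hc HE'e Hp0.
  have HS' := HS; rewrite Hs3 Hc1v in HS'.
  case HSyE : (tm y (filter (fun p => p.2 != v) E')) HS' HSy0 Hnz =>
     [|t1 [|t2 []]] //= _ HSy0 Hnz.
  have Ht1 : t1 <> zero by apply: Hnz; left.
  have Hgood : forall c, c <> zero -> phi (mul p0.1 c) <> phi t1 -> sat (xup v c y) E'.
    move=> c Hc0 Hphi; apply/ext_split; rewrite Hf HSyE.
    by apply: ext_forb => //; apply: mul_nz.
  case: (classic (phi (mul p0.1 c1) = phi t1)) => E1; last by left; apply: Hgood.
  right; apply: Hgood => // E2; apply: Dc; apply: (@hmul_cancel (phi p0.1)).
  by rewrite -(phiM Hb Hc1) -(phiM Hb Hc2) E1 E2.
have fin : forall c, c <> zero -> sat (xup v c y) E ->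
    (forall E', List.In E' (s1 ++ s2) -> sat (xup v c y) E') ->
    exists x : 'I_n -> F, (forall j, j \in W -> x j <> zero) /\
     (forall j, j \notin W -> x j = zero) /\ (forall E, List.In E eqs -> sat x E).
  move=> c Hc0 HE Hoth; exists (xup v c y); split; [|split].
  - move=> j jW; rewrite /xup; case: eqP => [//|/eqP jv].
    by apply: Hy1; rewrite in_setD1 jv jW.
  - move=> j jW; rewrite /xup; case: eqP => [jv|_]; first by rewrite jv vW in jW.
    by apply: Hy2; rewrite in_setD1 (negbTE jW) andbF.
  - move=> E0; rewrite Heqs => /In_cat [H|[<-|H]] //; apply: Hoth; apply/In_cat; auto.
set Ev := filter (fun p => p.2 == v) E.
have [al [Hal Hals]] : exists al, hs (map fst Ev) al /\ al <> zero.
  apply: hsN.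
  - by move=> t /In_map [p [/In_filter [Hp _] ->]]; apply: Hc HinEq Hp.
  - by apply: ne_size; rewrite size_map size_filter.
case: (cand Hals Hal) => ai [Hai Hcand].
have HSyE := HSynz E HinEq; have HSyEne := HSyne E HinEq.
case: Hforb => [Hf0|[Hf1 HdE]].
- case: (hsN HSyE HSyEne) => s [Hs Hs0].
  case: (Hcand _ s Hs0 Hs) => c [Hc0 _ Hex].
  apply: (fin c Hc0); first by apply/ext_split.
  move=> E' HE'; apply: other_ok => //; exact: count0_In Hf0 HE'.
- have HS := Hsizes E; move: HdE; rewrite /d3 /d3t => /andP [/eqP Hs3 /eqP Hc1v].
  have HS' : size (tm y (filter (fun p => p.2 != v) E)) = 2.
    by move: HS; rewrite Hs3 Hc1v; case.
  case HSyEq : (tm y (filter (fun p => p.2 != v) E)) HS' HSyE => [|t [|t' []]] //= _ HSyE'.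
  case: (hsD (x:=t) (l:=[:: t'])) => // [s1' [s2' [K1 K2 N1 N2 D]]].
  case: (Hcand _ s1' N1 K1) => c1 [Hc1 Ph1 Ex1].
  case: (Hcand _ s2' N2 K2) => c2 [Hc2 Ph2 Ex2].
  rewrite -HSyEq in Ex1 Ex2.
  have Dc : phi c1 <> phi c2.
    by rewrite Ph1 Ph2 => /hmul_cancel.
  case: (split_first Hf1) => t1 [E0 [t2 [Hsplit [HdE0 [Ht1 Ht2]]]]].
  have HE0 : List.In E0 (s1 ++ s2) by rewrite Hsplit; apply/In_cat; right; left.
  have Hoth : forall c, c <> zero -> forall E', List.In E' (s1 ++ s2) -> E' <> E0 ->
      sat (xup v c y) E'.
    move=> c Hc0 E' HE' Hne; apply: other_ok => //.
    move: HE'; rewrite {1}Hsplit => /In_cat [H|[H|H]].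
    + exact: count0_In Ht1 H.
    + by rewrite H in Hne.
    + exact: count0_In Ht2 H.
  have Hall : forall c, c <> zero -> sat (xup v c y) E0 ->
      forall E', List.In E' (s1 ++ s2) -> sat (xup v c y) E'.
    move=> c Hc0 HcE0 E' HE'; rewrite Hsplit in HE'.
    case/In_cat: HE' => [H|[H|H]].
    + apply: other_ok; [by rewrite Hsplit; apply/In_cat; left|exact: count0_In Ht1 H|done].
    + by rewrite -H.
    + apply: other_ok; [by rewrite Hsplit; apply/In_cat; right; right|exact: count0_In Ht2 H|done].
  case: (forb_ok E0 HE0 HdE0 c1 c2 Hc1 Hc2 Dc) => HE0c.
  + by apply: (fin c1 Hc1); [apply/ext_split|apply: Hall].
  + by apply: (fin c2 Hc2); [apply/ext_split|apply: Hall].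
Qed.

Lemma core N : CoreP N.
Proof.
have triv : forall W eqs, W = set0 -> exists x : 'I_n -> F,
    (forall j, j \in W -> x j <> zero) /\
    (forall j, j \notin W -> x j = zero) /\ (forall E, List.In E eqs -> sat x E).
  move=> W eqs ->; exists (fun _ => zero); split; first by move=> j; rewrite in_set0.
  split => // E _; rewrite /sat; apply/hs_zeros => // t /In_map [p [_ ->]].
  by rewrite mulr0.
elim: N => [|N IH] W eqs HW Hin Hc Hsp.
  by apply: triv; apply/eqP; rewrite -cards_eq0; move: HW; case: #|W|.
case: (eqVneq W set0) => W0; first by apply: triv.
case: (classic (exists T, [/\ T \proper W, 1 < #|T| & (#|T|).-1 <= count (insideb T) eqs])).
  by case=> T [H1 H2 H3]; apply: (case_i IH HW Hin Hc Hsp H1 H2 H3).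
move=> Hno; apply: (case_ii IH HW W0 Hin Hc Hsp) => T H1 H2.
rewrite ltnNge; apply/negP => H3; apply: Hno; exists T; split => //.
Qed.

Lemma count_minus (A : Type) (P Q : pred A) (s : seq A) :
  (forall x, Q x -> P x) -> count (fun x => P x && ~~ Q x) s + count Q s = count P s.
Proof.
move=> HQP; elim: s => [|x s IH] //=.
case Qx: (Q x); first by rewrite (HQP x Qx) /=; lia.
by case: (P x) => /=; lia.
Qed.

Lemma main_sec k (Hkn : k < n) (eqs : 'I_k -> seq (F * 'I_n)) :
  (forall i, lin_eq_wf zero (eqs i)) ->
  exists x : 'I_n -> F, (exists j, x j <> zero) /\
     (forall i, lin_eq_sat zero mul add (eqs i) x).
Proof.
move=> Hwf.
set L := [seq eqs i | i <- enum 'I_k].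
pose touch := fun (T : {set 'I_n}) (E : seq (F * 'I_n)) => has (fun p => p.2 \in T) E.
pose P := fun T : {set 'I_n} => (T != set0) && (count (touch T) L < #|T|).
have PT : P setT.
  apply/andP; split.
    by apply/set0Pn; exists (Ordinal (leq_ltn_trans (leq0n k) Hkn)); rewrite in_setT.
  rewrite cardsT card_ord; apply: leq_ltn_trans (count_size _ _) _.
  by rewrite /L size_map size_enum_ord.
case: (arg_minnP (fun T => #|T|) PT) => T /andP [T0 HTc] Tmin.
set RT := [seq filter (fun p => p.2 \in T) E | E <- filter (touch T) L].
have HL : forall E, List.In E L -> exists i, E = eqs i.
  by move=> E /In_map [i [_ ->]]; exists i.
case: (@core #|T| T RT) => //.
- apply/all_In => E' /In_map [E [_ ->]]; apply/all_In => p /In_filter [].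
  by [].
- move=> E' p /In_map [E [/In_filter [HE _] ->]] /In_filter [Hp _].
  case: (HL E HE) => i Ei; rewrite Ei in Hp; case: (Hwf i) => Hnz _.
  by case: p Hp => a j Hp; apply: Hnz Hp.
- move=> S sS S0; rewrite /RT count_map count_filter.
  case: (eqVneq S T) => EST.
    rewrite EST; apply: (leq_ltn_trans _ HTc).
    by apply: sub_count => E /andP [].
  set D := T :\: S.
  have D0 : D != set0.
    rewrite /D setD_eq0; apply/negP => sTS; apply/negP: EST; rewrite negbK eqEsubset sS.
    by [].
  have sDT : D \subset T by apply: subsetDl.
  have cT : #|T| = #|S| + #|D| by rewrite /D -(cardsID S T) (setIidPr sS).
  have cS0 : 0 < #|S| by rewrite card_gt0.
  have cD : #|D| < #|T| by rewrite cT; move: cS0; move: #|S| #|D| => a b; lia.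
  have HD : #|D| <= count (touch D) L.
    rewrite leqNgt; apply/negP => H; have := Tmin D; rewrite /P D0 H /= => /(_ isT).
    by rewrite leqNgt cD.
  have E1 : count (predI (insideb S \o filter (fun p => p.2 \in T)) (touch T)) L =
            count (fun E => touch T E && ~~ touch D E) L.
    apply: eq_count => E /=; rewrite andbC; congr (_ && _).
    rewrite /insideb all_filter /touch -all_predC; apply: eq_all => p /=.
    by rewrite /D in_setD; case: (p.2 \in T); case: (p.2 \in S).
  rewrite E1.
  have Hsub : forall E, touch D E -> touch T E.
    by move=> E /has_In [p [Hp HpD]]; apply/has_In; exists p; split => //; apply: (subsetP sDT).
  have := count_minus L Hsub.
  move: HTc HD cT; move: (count (fun E => touch T E && ~~ touch D E) L)
     (count (touch D) L) (count (touch T) L) #|T| #|S| #|D| => a b c d e f; lia.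
move=> x [Hx1 [Hx2 Hx3]]; exists x; split.
  by case/set0Pn: T0 => j jT; exists j; apply: Hx1.
move=> i; rewrite /lin_eq_sat; apply/(hs_split _ (fun p : F * 'I_n => p.2 \in T)).
exists zero, zero; split; last split; last by apply/add0.
- case: (boolP (touch T (eqs i))) => Ht.
    apply: Hx3; apply/In_map; exists (eqs i); split => //.
    apply/In_filter; split => //; apply/In_map; exists i; split => //.
    by apply: mem_In; rewrite mem_enum.
  have -> : filter (fun p => p.2 \in T) (eqs i) = [::].
    apply: size0nil; rewrite size_filter; apply/eqP; rewrite -leqn0 leqNgt -has_count.
    by [].
  by [].
- apply/hs_zeros => // t /In_map [p [/In_filter [_ Hp] ->]].
  by rewrite (Hx2 _ Hp) mulr0.
Qed.

End Mass.

Theorem mainTheorem1 (F : Type) (zero one : F) (mul : F -> F -> F)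
  (add : F -> F -> F -> Prop)
  (H : Type) (hmul : H -> H -> H) (hone : H) (hinv : H -> H) (phi : F -> H) :
  is_massouros zero one mul add hmul hone hinv phi ->
  forall (k n : nat), (k < n)%N ->
  forall eqs : 'I_k -> seq (F * 'I_n),
    (forall i, lin_eq_wf zero (eqs i)) ->
    exists x : 'I_n -> F,
      (exists j, x j <> zero) /\ (forall i, lin_eq_sat zero mul add (eqs i) x).
Proof.
move=> HM k n Hkn eqs Hwf.
exact: (@main_sec F zero one mul add H hmul hone hinv phi HM n k Hkn eqs Hwf).
Qed.
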